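(* For every $n\ge1$, the formula $\Phi_n$ separates $\mathcal{A}$ from $\mathcal{B}$, i.e. every trace in $\mathcal A$ satisfies $\Phi_n$ and no trace in $\mathcal B$ satisfies $\Phi_n$.
   Context: Fix $n\ge1$, atomic propositions $AP=\{\tilde p,\tilde q\}\cup P\cup Q$ with $P=\{p_1,\dots,p_n\}$, $Q=\{q_1,\dots,q_n\}$ (all distinct), $\Sigma=2^{AP}$. Formulae use literals, $\land,\lor$, $\mathsf F$ and $\mathsf O$, interpreted on finite non-empty traces $\sigma\in\Sigma^+$ at positions $0\le i<|\sigma|$: $\mathsf F\phi$ holds at $i$ iff $\phi$ holds at some $j$ with $i\le j<|\sigma|$; $\mathsf O\phi$ holds at $i$ iff $\phi$ holds at some $0\le j\le i$; $\sigma$ satisfies $\phi$ iff $\phi$ holds at position $0$. $\Phi_n := \mathsf{F}\big(\tilde q\land\bigwedge_{i=1}^n\big((q_i\land\mathsf{O}(\tilde p\land p_i))\lor(\neg q_i\land\mathsf{O}(\tilde p\land\neg p_i))\big)\big)$. Let $\alpha(n)=2^{n+1}(n+2)^2$. Let $T_P=\{\tau\in\Sigma:\tilde p\in\tau,\ \tau\subseteq P\cup\{\tilde p\}\}$ and $T_Q=\{\tau\in\Sigma:\tilde q\in\tau,\ \tau\subseteq Q\cup\{\tilde q\}\}$; for $\tau\in T_Q$ let $\overline\tau\in T_P$ be the letter with $p_i\in\overline\tau$ iff $q_i\in\tau$ for all $i$. Fix an arbitrary strict total order $\prec$ on $T_Q$, and let $\mathrm{Enum}$ be the unique word in $(\emptyset^{\alpha(n)}\cdot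 T_Q)^{2^n}\cdot\emptyset^{\alpha(n)}$ (here $\emptyset$ denotes the letter with no propositions) that lists every element of $T_Q$ exactly once in increasing $\prec$-order. For $\tau\in T_Q$, $\mathrm{Enum}_{-\tau}$ is obtained from $\mathrm{Enum}$ by deleting the unique position of letter $\tau$ together with the $\alpha(n)$ positions of letter $\emptyset$ immediately preceding it. Define $\mathcal A=\{\emptyset^j\cdot\overline\tau\cdot\mathrm{Enum}: j\in\mathbb N,\tau\in T_Q\}$ and $\mathcal B=\{\emptyset^j\cdot\overline\tau\cdot\mathrm{Enum}_{-\tau}: j\in\mathbb N,\tau\in T_Q\}$. *)

(* Defs.v *)
From mathcomp Require Import all_boot.
Set Implicit Arguments. Unset Strict Implicit. Unset Printing Implicit Defensive.

(* Atomic propositions for parameter n: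
   inl true = ~p, inl false = ~q, inr (i,true) = p_(i+1), inr (i,false) = q_(i+1). *)
Definition AP (n : nat) : finType := (bool + ('I_n * bool))%type.
Definition tp {n} : AP n := inl true.
Definition tq {n} : AP n := inl false.
Definition pp {n} (i : 'I_n) : AP n := inr (i, true).
Definition qq {n} (i : 'I_n) : AP n := inr (i, false).

Definition letter (n : nat) := {set AP n}.

Inductive formula (n : nat) : Type :=
| Lit : bool -> AP n -> formula n
| FAnd : formula n -> formula n -> formula n
| FOr : formula n -> formula n -> formula n
| Fut : formula n -> formula n
| Once : formula n -> formula n.

(* Semantics at position i of a finite trace s (meaningful for i < size s). *)
Fixpoint holds {n} (phi : formula n) (s : seq (letter n)) (i : nat) : Prop :=
  match phi with
  | Lit b a => (a \in nth set0 s i) = b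
  | FAnd f g => holds f s i /\ holds g s i
  | FOr f g => holds f s i \/ holds g s i
  | Fut f => exists j, i <= j < size s /\ holds f s j
  | Once f => exists j, j <= i /\ holds f s j
  end.

Definition sat {n} (s : seq (letter n)) (phi : formula n) : Prop :=
  0 < size s /\ holds phi s 0.

Definition conj_i {n} (i : 'I_n) : formula n :=
  FOr (FAnd (Lit true (qq i)) (Once (FAnd (Lit true tp) (Lit true (pp i)))))
      (FAnd (Lit false (qq i)) (Once (FAnd (Lit true tp) (Lit false (pp i))))).

Definition Phi (n : nat) : formula n :=
  Fut (foldl (@FAnd n) (Lit true tq) [seq conj_i i | i <- enum 'I_n]).

Definition alpha (n : nat) : nat := 2 ^ n.+1 * (n + 2) ^ 2.

Definition TP (n : nat) : {set letter n} :=
  [set t : letter n | (tp \in t) && (t \subset tp |: [set pp i | i : 'I_n])].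
Definition TQ (n : nat) : {set letter n} :=
  [set t : letter n | (tq \in t) && (t \subset tq |: [set qq i | i : 'I_n])].

Definition bar {n} (t : letter n) : letter n :=
  tp |: [set pp i | i : 'I_n & qq i \in t].

(* Enum, given the increasing listing ts of T_Q:
   (emptyset^alpha t_1) ... (emptyset^alpha t_{2^n}) emptyset^alpha *)
Definition Enum {n} (ts : seq (letter n)) : seq (letter n) :=
  flatten [seq rcons (nseq (alpha n) set0) t | t <- ts] ++ nseq (alpha n) set0.

Definition Enum_minus {n} (w : seq (letter n)) (t : letter n) : seq (letter n) :=
  let k := index t w in take (k - alpha n) w ++ drop k.+1 w.

Definition strict_total_on {n} (lt : rel (letter n)) : Prop :=
  [/\ {in TQ n, irreflexive lt},
      {in TQ n & &, transitive lt} &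
      {in TQ n &, forall x y, x != y -> lt x y || lt y x}].

Definition inA {n} (ts : seq (letter n)) (s : seq (letter n)) : Prop :=
  exists j t, t \in TQ n /\ s = nseq j set0 ++ bar t :: Enum ts.
Definition inB {n} (ts : seq (letter n)) (s : seq (letter n)) : Prop :=
  exists j t, t \in TQ n /\ s = nseq j set0 ++ bar t :: Enum_minus (Enum ts) t.

(* Main.v *)
Require Import Defs.
From mathcomp Require Import all_boot.
From mathcomp Require Import zify.

Section Aux.
Context {n : nat}.

Lemma pp_inj : injective (@pp n).
Proof. by move=> i j [->]. Qed.

Lemma bar_pp (t : letter n) i : (pp i \in bar t) = (qq i \in t).
Proof.
rewrite /bar in_setU1 /=. idtac.

by rewrite (mem_imset _ _ pp_inj) inE.
Qed.

Lemma bar_tp (t : letter n) : tp \in bar t.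
Proof. by rewrite /bar setU11. Qed.

Lemma bar_tq (t : letter n) : tq \notin bar t.
Proof.
rewrite /bar in_setU1 negb_or; apply/andP; split => //.
by apply/imsetP => -[i _].
Qed.

Lemma TQ_tp (x : letter n) : x \in TQ n -> tp \notin x.
Proof.
rewrite inE => /andP[_ /subsetP H]; apply/negP => /H.
by rewrite in_setU1 => /orP[//|/imsetP[i _]].
Qed.

Lemma TQ_tq (x : letter n) : x \in TQ n -> tq \in x.
Proof. by rewrite inE => /andP[]. Qed.

Lemma TQ_eq (x t : letter n) : x \in TQ n -> t \in TQ n ->
  (forall i, (qq i \in x) = (qq i \in t)) -> x = t.
Proof.
rewrite !inE => /andP[hx /subsetP sx] /andP[ht /subsetP st] H.
apply/setP => y.
case: (boolP (y \in tq |: [set qq i | i : 'I_n])).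
  rewrite in_setU1 => /orP[/eqP->|/imsetP[i _ ->]]; last exact: H.
  by rewrite hx ht.
move=> hy; apply/idP/idP => [/sx|/st]; by rewrite (negbTE hy).
Qed.

Lemma holds_fold (s : seq (letter n)) p (r : seq 'I_n) f :
  holds (foldl (@FAnd n) f [seq conj_i i | i <- r]) s p <->
  holds f s p /\ (forall i, i \in r -> holds (conj_i i) s p).
Proof.
elim: r f => [|a r IH] f /=.
  by split => [h|[]//]; split.
split.
  move=> /IH [[h1 h2] h3]; split => // i; rewrite in_cons => /orP[/eqP->//|]; exact: h3.
move=> [h1 h2]; apply/IH; split; first by split => //; apply: h2; rewrite mem_head.
by move=> i hi; apply: h2; rewrite in_cons hi orbT.
Qed.

Lemma mem_Enum (ts : seq (letter n)) x :
  x \in Enum ts -> x = set0 \/ x \in ts.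
Proof.
rewrite /Enum mem_cat => /orP[/flattenP[l /mapP[t ht ->]]|].
  rewrite mem_rcons in_cons => /orP[/eqP->|]; first by right.
  by move/nseqP => [-> _]; left.
by move/nseqP => [-> _]; left.
Qed.

Lemma ts_Enum (ts : seq (letter n)) t : t \in ts -> t \in Enum ts.
Proof.
move=> ht; rewrite /Enum mem_cat; apply/orP; left.
apply/flattenP; exists (rcons (nseq (alpha n) set0) t).
  by apply/mapP; exists t.
by rewrite mem_rcons mem_head.
Qed.

Lemma count_Enum (ts : seq (letter n)) t : t != set0 ->
  count_mem t (Enum ts) = count_mem t ts.
Proof.
move=> ht; rewrite /Enum count_cat count_nseq /= eq_sym (negbTE ht) mul0n addn0.
elim: ts => [|a ts IH] //=.
by rewrite count_cat -cats1 count_cat count_nseq /= eq_sym (negbTE ht) mul0n IH /= addn0.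
Qed.

Lemma mem_Enum_minus (w : seq (letter n)) t x :
  count_mem t w = 1 -> x \in Enum_minus w t -> x \in w /\ x != t.
Proof.
move=> hc; rewrite /Enum_minus mem_cat.
have tw : t \in w by rewrite -has_pred1 has_count hc.
set k := index t w.
have kl : k < size w by rewrite index_mem.
have dec : w = take k w ++ t :: drop k.+1 w.
  by rewrite -{1}(cat_take_drop k w) (drop_nth t kl) nth_index.
have : count_mem t (drop k.+1 w) = 0.
  move: hc; rewrite {1}dec count_cat /= eqxx; lia.
move/eqP; rewrite -leqn0 leqNgt -has_count has_pred1 => hd.
move=> /orP[hx|hx].
  split; first exact: mem_take hx.
  apply/eqP => ext; move: hx; rewrite ext in_take // => h.
  by move: h; rewrite -/k; lia.
split; first exact: mem_drop hx.
by apply/eqP => ext; move: hx; rewrite ext (negbTE hd).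
Qed.

End Aux.

Lemma nth_pos n (s : seq (letter n)) (P : pred (letter n)) r :
  P set0 = false -> P (nth set0 s r) -> nth set0 s r \in s.
Proof.
move=> P0; case: (ltnP r (size s)) => hr; first by rewrite mem_nth.
by rewrite nth_default // P0.
Qed.

Lemma nth_shift n (E : seq (letter n)) x j m :
  nth set0 (nseq j set0 ++ x :: E) (j + m) = nth set0 (x :: E) m.
Proof. by rewrite nth_cat size_nseq ltnNge leq_addr /= addKn. Qed.

Theorem lemma3 (n : nat) (hn : 1 <= n) (lt : rel (letter n))
  (hlt : strict_total_on lt) (ts : seq (letter n))
  (hts_enum : forall t, (t \in ts) = (t \in TQ n))
  (hts_uniq : uniq ts) (hts_sorted : sorted lt ts) :
  (forall s, inA ts s -> sat s (Phi n)) /\ (forall s, inB ts s -> ~ sat s (Phi n)).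
Proof.
split.
  move=> s [j [t [tQ ->]]].
  have tE : t \in Enum ts by apply: ts_Enum; rewrite hts_enum.
  split; first by rewrite size_cat /= addnS.
  exists (j + (index t (Enum ts)).+1); split.
    rewrite size_cat size_nseq /= ltn_add2l ltnS index_mem tE; by [].
  have hx : nth set0 (nseq j set0 ++ bar t :: Enum ts) (j + (index t (Enum ts)).+1) = t.
    by rewrite nth_shift /= nth_index.
  apply/holds_fold; split; first by rewrite /= hx TQ_tq.
  move=> i _ /=; rewrite hx.
  have hj : nth set0 (nseq j set0 ++ bar t :: Enum ts) j = bar t.
    by have := @nth_shift n (Enum ts) (bar t) j 0; rewrite addn0.
  case: (boolP (qq i \in t)) => hq.
    left; split => //; exists j; split; first by rewrite leq_addr.
    by rewrite hj bar_tp bar_pp hq.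
  right; split; first by apply: negbTE.
  exists j; split; first by rewrite leq_addr.
  by rewrite hj bar_tp bar_pp (negbTE hq).
move=> s0 [j [t [tQ ->]]] [_ [q [/andP[_ qlt] /holds_fold [htq hall]]]].
set s := nseq j set0 ++ bar t :: Enum_minus (Enum ts) t in htq hall qlt.
have t0 : t != set0 by apply/eqP => e; move: (@TQ_tq n t tQ); rewrite e inE.
have hc : count_mem t (Enum ts) = 1.
  by rewrite count_Enum // count_uniq_mem // hts_enum tQ.
have memS : forall y, y \in s -> y = set0 \/ y = bar t \/ (y \in TQ n /\ y != t).
  move=> y; rewrite mem_cat in_cons => /orP[/nseqP[-> _]|/orP[/eqP->|hy]].
  - by left.
  - by right; left.
  have [hy1 hy2] := mem_Enum_minus _ _ _ hc hy.
  case: (mem_Enum _ _ hy1) => [->|hy3]; first by left.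
  by right; right; rewrite -hts_enum.
have tpS : forall r, tp \in nth set0 s r -> nth set0 s r = bar t.
  move=> r hr.
  have := @nth_pos n s (fun y => tp \in y) r (in_set0 _) hr.
  move/memS => [e|[e|[e _]]] //; first by move: hr; rewrite e inE.
  by move: hr; rewrite (negbTE (@TQ_tp n _ e)).
have := @mem_nth _ set0 s q qlt.
move/memS => [e|[e|[xQ xt]]].
- by move: htq; rewrite /= e inE.
- by move: htq; rewrite /= e (negbTE (@bar_tq n t)).
apply/negP: xt; apply/negPn/eqP; apply: TQ_eq => // i.
have := hall i (mem_enum _ i).
move=> [[/= h1 [r [_ [h2 h3]]]]|[/= h1 [r [_ [h2 h3]]]]].
  by rewrite h1; move: h3; rewrite (tpS r h2) bar_pp.
by rewrite h1; move: h3; rewrite (tpS r h2) bar_pp.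
Qed.
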